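(* The polynomial sequences $(G_n(q))_{n\ge1}$ and $(S_n(q))_{n\ge1}$ are $q$-Euler–Gauss sequences, and neither satisfies the $q$-Gauss congruence $\sum_{d\mid n}\mu(d)a_{n/d}(q^d)\equiv 0\pmod{[n]_q}$ at any composite square-free $n$.
   Context: $\Phi_k(q)$ is the $k$-th cyclotomic polynomial, $\mu$ the Möbius function, and $[n]_q=1+q+\dots+q^{n-1}$. For $n>1$ let $s_n$ be the smallest prime factor of $n$ and $g_n$ the greatest prime factor of $n$. Define $S_1(q)=G_1(q)=\Phi_1(q)=q-1$, and for $n>1$, $S_n(q)=\Phi_{s_n}(q^{n/s_n})$ and $G_n(q)=\Phi_{g_n}(q^{n/g_n})$. Congruences of polynomials modulo $[n]_q$ mean divisibility of the difference by $[n]_q$ in $\mathbb{Z}[q]$. A sequence $(a_n(q))$ in $\mathbb{Z}[q]$ is a $q$-Euler–Gauss sequence if for all $n\ge1$, $\prod_{d\mid n,\,\mu(d)=1}a_{n/d}(q^d)\equiv\prod_{d\mid n,\,\mu(d)=-1}a_{n/d}(q^d)\pmod{[n]_q}$. *)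

(* Defs.v *)
From mathcomp Require Import all_boot all_order all_algebra.
From mathcomp Require Import cyclotomic.
Set Implicit Arguments. Unset Strict Implicit. Unset Printing Implicit Defensive.
Import GRing.Theory.
Local Open Scope ring_scope.

Definition squarefree (n : nat) : bool :=
  (0 < n)%N && all (fun p => logn p n <= 1)%N (primes n).

(* Moebius function (mu 1 = 1; mu 0 = 0 is an irrelevant convention) *)
Definition mu (n : nat) : int :=
  if squarefree n then (-1) ^+ size (primes n) else 0.

Definition qint (n : nat) : {poly int} := \sum_(i < n) 'X^i.

Definition pdvd (d p : {poly int}) : Prop := exists r : {poly int}, p = r * d.

Definition qsub (p : {poly int}) (d : nat) : {poly int} := p \Po 'X^d.

Definition Sseq (n : nat) : {poly int} :=
  if n == 1%N then 'Phi_1 else qsub 'Phi_(pdiv n) (n %/ pdiv n).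
Definition Gseq (n : nat) : {poly int} :=
  if n == 1%N then 'Phi_1 else qsub 'Phi_(max_pdiv n) (n %/ max_pdiv n).

Definition q_Euler_Gauss (a : nat -> {poly int}) : Prop :=
  forall n : nat, (0 < n)%N ->
    pdvd (qint n)
      (\prod_(d <- divisors n | mu d == 1) qsub (a (n %/ d)%N) d
       - \prod_(d <- divisors n | mu d == -1) qsub (a (n %/ d)%N) d).

Definition q_Gauss_at (a : nat -> {poly int}) (n : nat) : Prop :=
  pdvd (qint n) (\sum_(d <- divisors n) mu d *: qsub (a (n %/ d)%N) d).

(* Main.v *)
Require Import Defs.
From mathcomp Require Import all_boot all_order all_algebra.
From mathcomp Require Import cyclotomic.
From mathcomp Require Import zify ring.
Set Implicit Arguments. Unset Strict Implicit. Unset Printing Implicit Defensive.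
Import GRing.Theory.
Local Open Scope ring_scope.

Lemma sqf_gt0 d : squarefree d -> (0 < d)%N.
Proof. by case/andP. Qed.

Lemma mu_neq0 d : (mu d != 0) = squarefree d.
Proof.
rewrite /mu; case: (squarefree d) => /=; first by rewrite signr_eq0.
by [].
Qed.
Lemma dummy : True. by [].
Qed.

Lemma mu_nsqf d : ~~ squarefree d -> mu d = 0.
Proof. by rewrite /mu => /negbTE ->. Qed.

Lemma sqf1 : squarefree 1.
Proof. by []. Qed.

Lemma mu1 : mu 1 = 1.
Proof. by rewrite /mu sqf1. Qed.

Lemma sqf_dvd d e : (d %| e)%N -> squarefree e -> squarefree d.
Proof.
move=> de /andP [e0 /allP H]; apply/andP; split.
  by apply: (dvdn_gt0 e0).
apply/allP => p; rewrite mem_primes => /and3P [pp d0 pd].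
apply: (leq_trans (dvdn_leq_log p e0 de)).
apply: H; rewrite mem_primes pp e0 /=; exact: dvdn_trans pd de.
Qed.

Lemma size_primes_mul p d : prime p -> ~~ (p %| d)%N -> (0 < d)%N ->
  size (primes (p * d)) = (size (primes d)).+1.
Proof.
move=> pp npd d0.
have -> : size (primes (p*d)) = size (p :: primes d); last by [].
apply/perm_size/uniq_perm.
- exact: primes_uniq.
- by rewrite /= primes_uniq andbT mem_primes pp d0 /= (negbTE npd).
move=> q; rewrite in_cons !mem_primes muln_gt0 d0 (prime_gt0 pp) /=.
apply/idP/idP.
  case/andP => qp; rewrite Euclid_dvdM // => /orP [|qd]; last by rewrite qp qd orbT.
  by rewrite dvdn_prime2 // => ->.
case/orP => [/eqP ->|/andP [-> qd]]; first by rewrite pp dvdn_mulr.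
by rewrite dvdn_mull.
Qed.

Lemma sqf_mulp p d : prime p -> ~~ (p %| d)%N -> squarefree d ->
  squarefree (p * d) /\ mu (p * d) = - mu d.
Proof.
move=> pp npd sd; have d0 := sqf_gt0 sd.
have sq : squarefree (p * d).
  apply/andP; split; first by rewrite muln_gt0 d0 prime_gt0.
  apply/allP => q; rewrite mem_primes => /and3P [qp _ _].
  rewrite lognM ?(prime_gt0 pp) // (logn_prime _ pp).
  case: eqP => [->|_].
    by rewrite logn_coprime ?prime_coprime.
  case/andP: sd => _ /allP H; case: (boolP (q \in primes d)) => [/H//|].
  by rewrite -logn_gt0 -leqNgt => /leq_trans; apply.
split => //; rewrite /mu sq sd size_primes_mul // exprS; ring.
Qed.

Lemma sqf_mul_ndvd p d : prime p -> squarefree (p * d) -> ~~ (p %| d)%N.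
Proof.
move=> pp /andP [pd0 /allP H].
have d0 : (0 < d)%N by move: pd0; rewrite muln_gt0 => /andP [].
have : (logn p (p * d) <= 1)%N.
  by apply: H; rewrite mem_primes pp pd0 dvdn_mulr.
rewrite lognM ?(prime_gt0 pp) // (logn_prime _ pp) eqxx add1n ltnS leqn0 => /eqP L.
apply/negP => pd; have : (0 < logn p d)%N by rewrite logn_gt0 mem_primes pp d0.
by rewrite L.
Qed.

Definition sqd (n : nat) := [seq d <- divisors n | squarefree d].

Lemma mem_sqd n d : (0 < n)%N -> (d \in sqd n) = (d %| n)%N && squarefree d.
Proof. by move=> n0; rewrite mem_filter -dvdn_divisors // andbC. Qed.

Lemma sqd_split p k m : prime p -> ~~ (p %| m)%N -> (0 < m)%N -> (0 < k)%N ->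
  perm_eq (sqd (p ^ k * m)) (sqd m ++ [seq p * d | d <- sqd m]).
Proof.
move=> pp npm m0 k0.
have p0 := prime_gt0 pp.
have n0 : (0 < p ^ k * m)%N by rewrite muln_gt0 expn_gt0 p0 m0.
apply: uniq_perm.
- exact/filter_uniq/divisors_uniq.
- rewrite cat_uniq filter_uniq ?divisors_uniq //= map_inj_uniq ?filter_uniq ?divisors_uniq //; last first.
    by move=> x y /eqP; rewrite eqn_pmul2l // => /eqP.
  rewrite andbT; apply/hasPn => x /mapP [d _ ->]; rewrite mem_sqd //.
  apply/negP => /andP [pdm _]; apply: (negP npm); exact: dvdn_trans (dvdn_mulr _ _) pdm.
move=> x; rewrite mem_cat mem_sqd // mem_sqd //.
apply/idP/idP.
  case/andP => xn sx.
  case: (boolP (p %| x)%N) => [/dvdnP [d xE]|npx].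
    subst x; rewrite mulnC in sx xn *; apply/orP; right; apply/mapP; exists d => //.
    have npd := sqf_mul_ndvd pp sx.
    rewrite mem_sqd // (sqf_dvd (dvdn_mull p (dvdnn d)) sx) andbT.
    have : (d %| p ^ k.-1 * m)%N.
      move: xn; rewrite -(prednK k0) expnS -mulnA dvdn_pmul2l //.
    have cop : coprime d (p ^ k.-1) by rewrite coprime_sym coprimeXl // prime_coprime.
    by rewrite Gauss_dvdr.
  have cop : coprime x (p ^ k) by rewrite coprime_sym coprimeXl // prime_coprime.
  by move: xn; rewrite Gauss_dvdr // => ->; rewrite sx.
case/orP => [/andP [xm ->]|/mapP [d]]; first by rewrite dvdn_mull.
rewrite mem_sqd // => /andP [dm sd] ->.
have npd : ~~ (p %| d)%N by apply: contra npm => pd; exact: dvdn_trans pd dm.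
rewrite (sqf_mulp pp npd sd).1 andbT.
by rewrite -(prednK k0) expnS -mulnA dvdn_pmul2l // dvdn_mull.
Qed.

Lemma big_sqd_split (R : Type) (idx : R) (op : Monoid.com_law idx) p k m (h : nat -> R) :
  prime p -> ~~ (p %| m)%N -> (0 < m)%N -> (0 < k)%N ->
  \big[op/idx]_(d <- sqd (p ^ k * m)) h d =
    op (\big[op/idx]_(d <- sqd m) h d) (\big[op/idx]_(d <- sqd m) h (p * d)%N).
Proof.
move=> pp npm m0 k0; rewrite (perm_big _ (sqd_split pp npm m0 k0)) big_cat big_map //.
Qed.

Lemma prod_sqd (R : comRingType) n e (f : nat -> R) : e != 0 ->
  \prod_(d <- divisors n | mu d == e) f d = \prod_(d <- sqd n) (if mu d == e then f d else 1).
Proof.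
move=> e0; rewrite /sqd big_filter -big_mkcondr; apply: eq_bigl => d.
case: (boolP (mu d == e)) => [/eqP H|]; last by rewrite andbF.
by rewrite andbT -mu_neq0 H.
Qed.

Lemma prod_split (R : comRingType) e (f : nat -> R) p k m : e != 0 ->
  prime p -> ~~ (p %| m)%N -> (0 < m)%N -> (0 < k)%N ->
  \prod_(d <- divisors (p ^ k * m) | mu d == e) f d =
  \prod_(d <- divisors m | mu d == e) f d * \prod_(d <- divisors m | mu d == - e) f (p * d)%N.
Proof.
move=> e0 pp npm m0 k0.
rewrite !prod_sqd ?oppr_eq0 // (big_sqd_split _ _ pp npm m0 k0); congr (_ * _).
rewrite big_seq_cond [RHS]big_seq_cond; apply: eq_bigr => d.
rewrite andbT mem_sqd // => /andP [dm sd].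
have npd : ~~ (p %| d)%N by apply: contra npm => pd; exact: dvdn_trans pd dm.
rewrite (sqf_mulp pp npd sd).2.
by rewrite -eqr_opp opprK.
Qed.

Lemma sum_sqd n (g : nat -> {poly int}) :
  \sum_(d <- divisors n) mu d *: g d = \sum_(d <- sqd n) mu d *: g d.
Proof.
rewrite /sqd big_filter [RHS]big_mkcond; apply: eq_bigr => d _.
by case: ifP => // /negbT /mu_nsqf ->; rewrite scale0r.
Qed.

Lemma sum_split (g : nat -> {poly int}) p k m :
  prime p -> ~~ (p %| m)%N -> (0 < m)%N -> (0 < k)%N ->
  \sum_(d <- divisors (p ^ k * m)) mu d *: g d =
  \sum_(d <- divisors m) mu d *: g d - \sum_(d <- divisors m) mu d *: g (p * d)%N.
Proof.
move=> pp npm m0 k0.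
rewrite !sum_sqd (big_sqd_split _ _ pp npm m0 k0); congr (_ + _).
rewrite -sumrN big_seq [RHS]big_seq; apply: eq_bigr => d.
rewrite mem_sqd // => /andP [dm sd].
have npd : ~~ (p %| d)%N by apply: contra npm => pd; exact: dvdn_trans pd dm.
by rewrite (sqf_mulp pp npd sd).2 scaleNr.
Qed.

Lemma qsubE p d : qsub p d = comp_poly ('X^d) p.
Proof. by []. Qed.

Lemma compXn (q : {poly int}) a : 'X^a \Po q = q ^+ a.
Proof. by rewrite (rmorphXn (comp_poly q)) /= comp_polyX. Qed.

Lemma qsub1 p : qsub p 1 = p.
Proof. by rewrite /qsub expr1 comp_polyXr. Qed.

Lemma qsubqsub p a b : qsub (qsub p a) b = qsub p (a * b).
Proof.
by rewrite /qsub -comp_polyA compXn -exprM mulnC.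
Qed.

Lemma qsubXn a b : qsub 'X^a b = 'X^(b * a).
Proof. by rewrite /qsub compXn -exprM. Qed.

Lemma qsub_qint n a : qsub (qint n) a = \sum_(i < n) ('X^a) ^+ i.
Proof.
rewrite /qint qsubE rmorph_sum; apply: eq_bigr => i _ /=.
by rewrite compXn.
Qed.

Lemma Xsub1_qint n : 'X^n - 1 = ('X - 1) * qint n :> {poly int}.
Proof. by rewrite subrX1. Qed.

Lemma qint_mul a b : qint (a * b) = qint a * qsub (qint b) a.
Proof.
have nz : ('X - 1 : {poly int}) != 0 by rewrite -polyC1 polyXsubC_eq0.
apply: (mulfI nz); rewrite -Xsub1_qint mulrA -Xsub1_qint qsub_qint -subrX1.
by rewrite -exprM.
Qed.

Lemma qint1 : qint 1 = 1.
Proof. by rewrite /qint big_ord1 expr0. Qed.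

Lemma horner_qint n : (qint n).[1] = n%:R.
Proof.
rewrite /qint horner_sum (eq_bigr (fun _ => 1)) => [|i _]; last by rewrite hornerXn expr1n.
by rewrite sumr_const card_ord.
Qed.

Lemma Phi1 : 'Phi_1 = 'X - 1.
Proof.
have := prod_Cyclotomic (isT : (0 < 1)%N).
have -> : divisors 1 = [:: 1%N] by [].
by rewrite big_seq1 expr1.
Qed.

Lemma divisors_prime p : prime p -> perm_eq (divisors p) [:: 1%N; p].
Proof.
move=> pp; apply: uniq_perm; first exact: divisors_uniq.
  by rewrite /= inE andbT; apply/eqP => p1; rewrite -p1 in pp.
move=> d; rewrite -dvdn_divisors ?prime_gt0 // !inE.
case/primeP: pp => _ H; apply/idP/idP; first exact: H.
by case/orP => /eqP ->; rewrite ?dvd1n ?dvdnn.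
Qed.

Lemma Phi_prime p : prime p -> 'Phi_p = qint p.
Proof.
move=> pp; have := prod_Cyclotomic (prime_gt0 pp).
rewrite (perm_big _ (divisors_prime pp)) /= big_cons big_seq1 Phi1 Xsub1_qint.
have nz : ('X - 1 : {poly int}) != 0 by rewrite -polyC1 polyXsubC_eq0.
exact: (mulfI nz).
Qed.

Lemma pdvd0 d : pdvd d 0.
Proof. by exists 0; rewrite mul0r. Qed.

Lemma pdvdD d a b : pdvd d a -> pdvd d b -> pdvd d (a + b).
Proof. by move=> [r ->] [s ->]; exists (r + s); rewrite mulrDl. Qed.

Lemma pdvdN d a : pdvd d a -> pdvd d (- a).
Proof. by move=> [r ->]; exists (- r); rewrite mulNr. Qed.

Lemma pdvdMl d a b : pdvd d a -> pdvd d (b * a).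
Proof. by move=> [r ->]; exists (b * r); rewrite mulrA. Qed.

Lemma pdvd_refl d : pdvd d d.
Proof. by exists 1; rewrite mul1r. Qed.

Lemma pdvd_sum d (I : Type) (r : seq I) (F : I -> {poly int}) :
  (forall i, pdvd d (F i)) -> pdvd d (\sum_(i <- r) F i).
Proof.
move=> H; apply: (big_ind (pdvd d)); [exact: pdvd0 | exact: pdvdD | by move=> i _].
Qed.

Lemma pdvd_Xmod P a : pdvd (qint P) ('X^a - 'X^(a %% P)).
Proof.
have -> : 'X^a = ('X^P) ^+ (a %/ P) * 'X^(a %% P) :> {poly int}.
  by rewrite -exprM -exprD mulnC -divn_eq.
have := subrX1 ('X^P : {poly int}) (a %/ P); rewrite Xsub1_qint => E.
exists (('X - 1) * (\sum_(i < a %/ P) ('X^P) ^+ i) * 'X^(a %% P)).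
have -> : ('X^P) ^+ (a %/ P) = ('X - 1) * qint P * (\sum_(i < a %/ P) ('X^P) ^+ i) + 1 :> {poly int}.
  by rewrite -E subrK.
ring.
Qed.

Lemma Phi_sub_dvd P m : prime P -> coprime P m -> pdvd (qint P) (qsub 'Phi_P m).
Proof.
move=> pp cop; rewrite Phi_prime // qsub_qint.
have E : \sum_(i < P) ('X^m : {poly int}) ^+ i =
   \sum_(i < P) ('X^(m * i) - 'X^((m * i) %% P)) + \sum_(i < P) 'X^((m * i) %% P).
  by rewrite -big_split /=; apply: eq_bigr => i _; rewrite subrK exprM.
rewrite E; apply: pdvdD; first by apply: pdvd_sum => i; exact: pdvd_Xmod.
have P0 := prime_gt0 pp.
pose h (i : 'I_P) : 'I_P := Ordinal (ltn_pmod (m * i) P0).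
have hinj : injective h.
  move=> i j /(congr1 val) /= /eqP.
  wlog le : i j / (i <= j)%N.
    move=> W; case: (leqP i j) => [|/ltnW] l; first exact: W.
    by move=> E0; apply/esym; apply: W l _; rewrite eq_sym.
  rewrite eq_sym eqn_mod_dvd ?leq_mul2l ?le ?orbT // -mulnBr Gauss_dvdr //.
  move=> D; apply/val_inj/eqP; rewrite eqn_leq le /=.
  rewrite -subn_eq0; apply/negP => nz.
  have jP := ltn_ord j.
  have : (P <= j - i)%N by apply: dvdn_leq => //; rewrite lt0n; apply/negP.
  lia.
have -> : \sum_(i < P) 'X^((m * i) %% P) = qint P :> {poly int}.
  by rewrite /qint [RHS](reindex_inj hinj).
exact: pdvd_refl.
Qed.

Definition good (a : nat -> {poly int}) (c : nat -> nat) :=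
  a 1%N = 'X - 1 /\
  (forall m, (1 < m)%N -> [/\ prime (c m), (c m %| m)%N & a m = qsub 'Phi_(c m) (m %/ c m)]) /\
  (forall n m, (1 < n)%N -> (m %| n)%N -> (c n %| m)%N -> c m = c n).

Definition EGp (a : nat -> {poly int}) n (e : int) :=
  \prod_(d <- divisors n | mu d == e) qsub (a (n %/ d)%N) d.

Lemma good_at a c n x : good a c -> (1 < n)%N -> (x %| n)%N -> (c n %| x)%N ->
  a x = qsub 'Phi_(c n) (x %/ c n).
Proof.
move=> [_ [H2 H3]] n1 xn cx.
have [pp _ _] := H2 _ n1.
have x0 : (0 < x)%N by apply: dvdn_gt0 xn; apply: ltnW.
have x1 : (1 < x)%N by apply: leq_trans (prime_gt1 pp) (dvdn_leq x0 cx).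
have [_ _ ->] := H2 _ x1; by rewrite (H3 _ _ n1 xn cx).
Qed.

Lemma Q_prod (I : Type) (r : seq I) (P : pred I) (F : I -> {poly int}) b :
  qsub (\prod_(i <- r | P i) F i) b = \prod_(i <- r | P i) qsub (F i) b.
Proof. by rewrite qsubE rmorph_prod. Qed.

Lemma pdvd1 x : pdvd 1 x.
Proof. by exists x; rewrite mulr1. Qed.

Lemma prod_const_split (F : {poly int}) m : (1 < m)%N ->
  \prod_(d <- divisors m | mu d == 1) F = \prod_(d <- divisors m | mu d == -1) F.
Proof.
move=> m1; have m0 : (0 < m)%N by apply: ltnW.
have pp := pdiv_prime m1.
have [m2 cop E] := pfactor_coprime pp m0.
have k0 : (0 < logn (pdiv m) m)%N by rewrite logn_gt0 mem_primes pp m0 pdiv_dvd.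
have m20 : (0 < m2)%N by move: m0; rewrite E muln_gt0 => /andP [].
have npm : ~~ (pdiv m %| m2)%N by rewrite -prime_coprime.
rewrite E mulnC !(prod_split (fun _ => F) _ pp npm m20 k0) ?oppr_eq0 ?oner_eq0 //.
by rewrite opprK mulrC.
Qed.

Lemma eq_prod_seq (r : seq nat) (Q : pred nat) (F1 F2 : nat -> {poly int}) :
  (forall d, d \in r -> F1 d = F2 d) ->
  \prod_(d <- r | Q d) F1 d = \prod_(d <- r | Q d) F2 d.
Proof.
move=> H; rewrite big_seq_cond [RHS]big_seq_cond; apply: eq_bigr => d /andP [Hd _].
exact: H.
Qed.

Theorem EG a c : good a c -> forall n, (0 < n)%N -> pdvd (qint n) (EGp a n 1 - EGp a n (-1)).
Proof.
move=> G; elim/ltn_ind => n IH n0.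
have [n1|] := boolP (1 < n)%N; last first.
  rewrite -leqNgt => n1; have -> : n = 1%N by apply/eqP; rewrite eqn_leq n1 n0.
  by rewrite qint1; exact: pdvd1.
set P := c n.
have [pp Pn _] := G.2.1 n n1.
have P0 := prime_gt0 pp.
have [m cop En0] := pfactor_coprime pp n0.
have k0 : (0 < logn P n)%N by rewrite logn_gt0 mem_primes pp n0.
have [k' Ek] : exists k', logn P n = k'.+1 by exists (logn P n).-1; rewrite prednK.
rewrite Ek in En0.
have m0 : (0 < m)%N by move: n0; rewrite En0 muln_gt0 => /andP [].
have npm : ~~ (P %| m)%N by rewrite -prime_coprime.
have En : n = (P ^ k'.+1 * m)%N by rewrite mulnC.
have Esplit : forall e : int, e != 0 -> EGp a n e =
   \prod_(d <- divisors m | mu d == e) qsub (a (n %/ d)%N) d *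
   \prod_(d <- divisors m | mu d == - e) qsub (a (n %/ (P * d))%N) (P * d)%N.
  move=> e e0; rewrite /EGp {1}En.
  exact: (prod_split (fun d => qsub (a (n %/ d)%N) d) e0 pp npm m0 (ltn0Sn k')).
set F := qsub 'Phi_P (P ^ k' * m).
have HX : forall d, d \in divisors m -> qsub (a (n %/ d)%N) d = F.
  move=> d; rewrite -dvdn_divisors // => /dvdnP [e me].
  have d0 : (0 < d)%N by move: m0; rewrite me muln_gt0 => /andP [].
  have nd : n = (P * (P ^ k' * e) * d)%N by rewrite En me expnS; lia.
  rewrite [in a _]nd mulnK // (good_at G n1) -/P; last 2 first.
  - by rewrite [in X in (_ %| X)%N]nd dvdn_mulr.
  - by rewrite dvdn_mulr.
  by rewrite mulKn // qsubqsub /F me; congr qsub; lia.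
have Emul : forall d e, m = (e * d)%N -> (n %/ (P * d) = P ^ k' * e)%N.
  move=> d e me.
  have d0 : (0 < d)%N by move: m0; rewrite me muln_gt0 => /andP [].
  have -> : n = (P ^ k' * e * (P * d))%N by rewrite En me expnS; lia.
  by rewrite mulnK // muln_gt0 P0.
clear En0 Ek k0.
have EF : F = qsub 'Phi_P (P ^ k' * m) by [].
clearbody F.
case: k' En Esplit EF HX Emul => [|k''] En Esplit EF HX Emul; last first.
  (* k >= 2 : all factors equal F *)
  have HY : forall d, d \in divisors m -> qsub (a (n %/ (P * d))%N) (P * d) = F.
    move=> d; rewrite -dvdn_divisors // => /dvdnP [e me].
    rewrite (Emul d e me) (good_at G n1) -/P; last 2 first.
    - by rewrite En me; apply/dvdnP; exists (P * d)%N; rewrite !expnS; lia.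
    - by rewrite expnS -mulnA dvdn_mulr.
    by rewrite expnS -mulnA mulKn // qsubqsub EF me; congr qsub; rewrite !expnS; lia.
  rewrite !Esplit ?oppr_eq0 ?oner_eq0 // opprK.
  rewrite !(@eq_prod_seq _ _ _ (fun _ => F) HX) !(@eq_prod_seq _ _ _ (fun _ => F) HY).
  rewrite [X in _ - X]mulrC subrr; exact: pdvd0.
have Enm : n = (P * m)%N by rewrite En expn1.
have HY : forall d, d \in divisors m ->
    qsub (a (n %/ (P * d))%N) (P * d) = qsub (qsub (a (m %/ d)%N) d) P.
  move=> d; rewrite -dvdn_divisors // => /dvdnP [e me].
  have d0 : (0 < d)%N by move: m0; rewrite me muln_gt0 => /andP [].
  rewrite (Emul d e me) expn0 mul1n qsubqsub mulnC; congr (qsub (a _) _).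
  by rewrite me mulnK.
rewrite !Esplit ?oppr_eq0 ?oner_eq0 // opprK.
rewrite !(@eq_prod_seq _ _ _ (fun _ => F) HX) !(eq_prod_seq _ HY) -!Q_prod.
rewrite -/(EGp a m 1) -/(EGp a m (-1)).
have Fdvd : pdvd (qint P) F by rewrite EF expn0 mul1n; exact: Phi_sub_dvd.
case: (ltngtP m 1) => [|m1|m1].
- by rewrite ltnS leqn0 => /eqP m00; rewrite m00 in m0.
- have mn : (m < n)%N by rewrite Enm -{1}(mul1n m) ltn_mul2r m0 prime_gt1.
  have [r Er] := IH m mn m0.
  have [A' EA] : exists A', \prod_(d <- divisors m | mu d == 1) F = F * A'.
    by eexists; rewrite big_mkcond (bigD1_seq 1%N) ?divisor1 ?divisors_uniq //= mu1 eqxx.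
  rewrite -(prod_const_split F m1) EA.
  case: Fdvd => r0 Er0.
  exists (- (r0 * A' * qsub r P)).
  rewrite Enm qint_mul.
  have EQ : qsub (EGp a m 1) P = qsub (EGp a m (-1)) P + qsub r P * qsub (qint m) P.
    have : qsub (EGp a m 1) P - qsub (EGp a m (-1)) P = qsub r P * qsub (qint m) P.
      by rewrite /qsub -comp_polyB Er comp_polyM.
    by move/eqP; rewrite subr_eq addrC => /eqP.
  rewrite EQ.
  rewrite Er0; ring.
- rewrite m1 in Enm EF *.
  have D1 : divisors 1 = [:: 1%N] by [].
  rewrite /EGp D1 !big_cons !big_nil mu1 eqxx /= divnn /= qsub1.
  rewrite !mulr1 !mul1r (G.1) Enm muln1 EF expn0 mul1n qsub1 Phi_prime //.
  rewrite !qsubE rmorph1 rmorphB rmorph1 /= comp_polyX.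
  exists (1 - ('X - 1)); rewrite Xsub1_qint; ring.
Qed.

Definition Tg (a : nat -> {poly int}) n := \sum_(d <- divisors n) mu d *: qsub (a (n %/ d)%N) d.

Lemma horner_qsub1 f b : (qsub f b).[1] = f.[1].
Proof. by rewrite /qsub horner_comp hornerXn expr1n. Qed.

Lemma sum_const_zero (F : {poly int}) m : (1 < m)%N -> \sum_(d <- divisors m) mu d *: F = 0.
Proof.
move=> m1; have m0 : (0 < m)%N by apply: ltnW.
have pp := pdiv_prime m1.
have [m2 cop E] := pfactor_coprime pp m0.
have k0 : (0 < logn (pdiv m) m)%N by rewrite logn_gt0 mem_primes pp m0 pdiv_dvd.
have m20 : (0 < m2)%N by move: m0; rewrite E muln_gt0 => /andP [].
have npm : ~~ (pdiv m %| m2)%N by rewrite -prime_coprime.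
by rewrite E mulnC (sum_split (fun _ => F) pp npm m20 k0) subrr.
Qed.

Lemma TG a c : good a c -> forall n, (1 < n)%N -> squarefree n ->
  exists p, [/\ prime p, (p %| n)%N & (Tg a n).[1] = p%:R \/ (Tg a n).[1] = - p%:R].
Proof.
move=> G; elim/ltn_ind => n IH n1 sqn.
have n0 : (0 < n)%N by apply: ltnW.
set P := c n.
have [pp Pn _] := G.2.1 n n1.
have P0 := prime_gt0 pp.
have [m cop En0] := pfactor_coprime pp n0.
have Ek : logn P n = 1%N.
  apply/eqP; rewrite eqn_leq; apply/andP; split.
    by case/andP: sqn => _ /allP; apply; rewrite mem_primes pp n0.
  by rewrite logn_gt0 mem_primes pp n0.
rewrite Ek in En0.
have m0 : (0 < m)%N by move: n0; rewrite En0 muln_gt0 => /andP [].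
have npm : ~~ (P %| m)%N by rewrite -prime_coprime.
have En : n = (P ^ 1 * m)%N by rewrite mulnC.
have Enm : n = (P * m)%N by rewrite En expn1.
set F := qsub 'Phi_P m.
have HX : forall d, d \in divisors m -> qsub (a (n %/ d)%N) d = F.
  move=> d; rewrite -dvdn_divisors // => /dvdnP [e me].
  have d0 : (0 < d)%N by move: m0; rewrite me muln_gt0 => /andP [].
  have nd : n = (P * e * d)%N by rewrite Enm me; lia.
  rewrite [in a _]nd mulnK // (good_at G n1) -/P; last 2 first.
  - by rewrite [in X in (_ %| X)%N]nd dvdn_mulr.
  - by rewrite dvdn_mulr.
  by rewrite mulKn // qsubqsub /F me.
have HY : forall d, d \in divisors m ->
    qsub (a (n %/ (P * d))%N) (P * d) = qsub (qsub (a (m %/ d)%N) d) P.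
  move=> d; rewrite -dvdn_divisors // => /dvdnP [e me].
  have d0 : (0 < d)%N by move: m0; rewrite me muln_gt0 => /andP [].
  rewrite qsubqsub mulnC; congr (qsub (a _) _).
  rewrite Enm me; have -> : (P * (e * d) = e * (d * P))%N by lia.
  by rewrite mulnK ?muln_gt0 ?d0 // mulnK.
have ET : Tg a n = \sum_(d <- divisors m) mu d *: F - qsub (Tg a m) P.
  rewrite /Tg {1}En (sum_split (fun d => qsub (a (n %/ d)%N) d) pp npm m0 (ltn0Sn 0)).
  congr (_ - _).
    rewrite big_seq [RHS]big_seq; apply: eq_bigr => d Hd; by rewrite HX.
  rewrite qsubE raddf_sum big_seq [RHS]big_seq; apply: eq_bigr => d Hd /=.
  by rewrite HY // comp_polyZ.
have F1 : F.[1] = P%:R by rewrite /F horner_qsub1 Phi_prime // horner_qint.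
case: (ltngtP m 1) => [|m1|m1].
- by rewrite ltnS leqn0 => /eqP m00; rewrite m00 in m0.
- have mn : (m < n)%N by rewrite Enm -{1}(mul1n m) ltn_mul2r m0 prime_gt1.
  have sqm : squarefree m by apply: sqf_dvd sqn; rewrite Enm dvdn_mull.
  have [p [pp' pm Hp]] := IH m mn m1 sqm.
  exists p; split => //; first by rewrite Enm dvdn_mull.
  rewrite ET sum_const_zero // sub0r hornerN horner_qsub1.
  by case: Hp => ->; [right | left; rewrite opprK].
- exists P; split => //; left.
  rewrite ET m1 /Tg.
  have D1 : divisors 1 = [:: 1%N] by [].
  rewrite D1 !big_cons !big_nil mu1 !scale1r !addr0 divnn /= qsub1 (G.1).
  by rewrite hornerD hornerN !horner_qsub1 Phi_prime // horner_qint hornerD hornerN hornerX hornerC subrr subr0.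
Qed.

Lemma notGauss a c n : good a c -> (1 < n)%N -> ~~ prime n -> squarefree n -> ~ q_Gauss_at a n.
Proof.
move=> G n1 np sqn [r Er].
have [p [pp pn Hp]] := TG G n1 sqn.
have E1 : (Tg a n).[1] = r.[1] * n%:R by rewrite /Tg Er hornerM horner_qint.
have : p = (`|r.[1]| * n)%N.
  case: Hp => H; move: E1; rewrite H => /(congr1 absz); rewrite ?abszN abszM !natz //.
have n0 : (0 < n)%N by apply: ltnW.
move=> pE.
have : (n %| p)%N by rewrite pE dvdn_mull.
move=> /(dvdn_leq (prime_gt0 pp)) => le.
have := dvdn_leq n0 pn => le2.
have : p = n by apply/eqP; rewrite eqn_leq le le2.
by move=> pn'; rewrite -pn' pp in np.
Qed.

Lemma goodG : good Gseq max_pdiv.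
Proof.
split; first by rewrite /Gseq eqxx Phi1.
split.
  move=> m m1; split; [exact: max_pdiv_prime | exact: max_pdiv_dvd |].
  by rewrite /Gseq gtn_eqF.
move=> n m n1 mn cm.
have n0 : (0 < n)%N by apply: ltnW.
have m0 : (0 < m)%N by apply: dvdn_gt0 mn.
have pn := max_pdiv_prime n1.
have m1 : (1 < m)%N by apply: leq_trans (prime_gt1 pn) (dvdn_leq m0 cm).
apply/eqP; rewrite eqn_leq; apply/andP; split.
  apply: max_pdiv_max; rewrite mem_primes max_pdiv_prime // n0 /=.
  exact: dvdn_trans (max_pdiv_dvd m) mn.
by apply: max_pdiv_max; rewrite mem_primes pn m0 cm.
Qed.

Lemma goodS : good Sseq pdiv.
Proof.
split; first by rewrite /Sseq eqxx Phi1.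
split.
  move=> m m1; split; [exact: pdiv_prime | exact: pdiv_dvd |].
  by rewrite /Sseq gtn_eqF.
move=> n m n1 mn cm.
have n0 : (0 < n)%N by apply: ltnW.
have m0 : (0 < m)%N by apply: dvdn_gt0 mn.
have pn := pdiv_prime n1.
have m1 : (1 < m)%N by apply: leq_trans (prime_gt1 pn) (dvdn_leq m0 cm).
apply/eqP; rewrite eqn_leq; apply/andP; split.
  exact: pdiv_min_dvd (prime_gt1 pn) cm.
apply: pdiv_min_dvd (prime_gt1 (pdiv_prime m1)) _.
exact: dvdn_trans (pdiv_dvd m) mn.
Qed.

Theorem theorem10 :
  q_Euler_Gauss Gseq /\ q_Euler_Gauss Sseq /\
  (forall n : nat, (1 < n)%N -> ~~ prime n -> squarefree n ->
     ~ q_Gauss_at Gseq n /\ ~ q_Gauss_at Sseq n).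
Proof.
split; first exact: (EG goodG).
split; first exact: (EG goodS).
move=> n n1 np sqn; split; [exact: (notGauss goodG) | exact: (notGauss goodS)].
Qed.
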